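(* Let $\psi$ be any real-valued function of $r$ and $\varphi(s,r)=s+\psi(r)$. Fix $r>0$ and for $s>-\psi(r)$ put $$f(s,r)=\dfrac{1}{2\varphi(s,r)+2\,\mathop{K}\limits_{n=1}^{\infty}\left(\dfrac{n^2r^2}{\varphi(s,r)}\right)}.$$ Then $f(\cdot,r)$ is the unique solution of the functional equation $$f(s,r)+f(s+2r,r)=\frac{1}{\varphi(s,r)+r}\qquad(s>-\psi(r))$$ satisfying $\lim_{s\to\infty}f(s,r)=0$.
   Context: $\mathop{K}_{n=1}^{\infty}\left(\frac{a_n}{b}\right)$ denotes the continued fraction $\cfrac{a_1}{b+\cfrac{a_2}{b+\cdots}}$ (limit of convergents). *)

(* Defs.v *)
From Stdlib Require Import Reals.
From Coquelicot Require Import Coquelicot.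
Open Scope R_scope.

Fixpoint cf_from (a : nat -> R) (b : R) (k n : nat) : R :=
  match n with
  | O => 0
  | S n' => a k / (b + cf_from a b (S k) n')
  end.

(* N-th convergent of K_{n=1}^oo (a_n / b) = a_1/(b + a_2/(b + ... + a_N/b)) *)
Definition cf_convergent (a : nat -> R) (b : R) (N : nat) : R :=
  cf_from a b 1 N.

Definition cf_converges_to (a : nat -> R) (b : R) (v : R) : Prop :=
  is_lim_seq (cf_convergent a b) v.

(* Main.v *)
Require Import Defs.
From Stdlib Require Import Reals Lra Lia.
From Coquelicot Require Import Coquelicot.
Open Scope R_scope.

Definition Ee (r t : R) := exp (- (r*t)).
Definition th r t := (1 - Ee r t ^2)/(1 + Ee r t ^2).
Definition sh r t := 2 * Ee r t / (1 + Ee r t ^2).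
Definition Fk x r k t := exp (-(x*t)) * th r t ^ k * sh r t.

Lemma is_derive_eq (f : R -> R) x l l' : is_derive f x l -> l = l' -> is_derive f x l'.
Proof. intros; subst; auto. Qed.

Lemma Ee_pos r t : 0 < Ee r t. Proof. apply exp_pos. Qed.
Lemma den_pos r t : 0 < 1 + Ee r t ^ 2.
Proof. pose proof (Ee_pos r t). nra. Qed.

Lemma sh_th r t : sh r t ^ 2 = 1 - th r t ^ 2.
Proof. unfold sh, th. pose proof (den_pos r t). field. lra. Qed.

Lemma th_derive r t : is_derive (th r) t (r * sh r t ^ 2).
Proof.
  unfold th, sh, Ee. pose proof (den_pos r t) as D. unfold Ee in D.
  auto_derive. lra. field. lra.
Qed.

Lemma sh_derive r t : is_derive (sh r) t (- r * sh r t * th r t).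
Proof.
  unfold th, sh, Ee. pose proof (den_pos r t) as D. unfold Ee in D.
  auto_derive. lra. field. lra.
Qed.

Lemma Fk_derive x r k t :
  is_derive (Fk x r k) t
   (- x * Fk x r k t + r * INR k * Fk x r (pred k) t - r * (INR k + 1) * Fk x r (S k) t).
Proof.
  assert (He : is_derive (fun t => exp (-(x*t))) t (- x * exp (-(x*t)))).
  { auto_derive. auto. ring. }
  pose proof (is_derive_pow _ k _ _ (th_derive r t)) as Hp.
  pose proof (is_derive_mult _ _ t _ _ (is_derive_mult _ _ t _ _ He Hp Rmult_comm)
                (sh_derive r t) Rmult_comm) as H.
  unfold Fk. eapply is_derive_eq. exact H.
  unfold plus, mult; simpl.
  pose proof (sh_th r t) as S2.
  destruct k as [|m].
  - simpl. ring.
  - rewrite S_INR. simpl pred. simpl in S2. simpl.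
    replace (sh r t * (sh r t * 1)) with (1 - th r t * (th r t * 1)) by (rewrite <- S2; ring).
    ring.
Qed.


Lemma exp_le_mono a b : a <= b -> exp a <= exp b.
Proof. intros [H|H]. left; apply exp_increasing; auto. subst; lra. Qed.

Lemma Ee_le1 r t : 0 <= r -> 0 <= t -> Ee r t <= 1.
Proof. intros. unfold Ee. rewrite <- exp_0. apply exp_le_mono. nra. Qed.

Lemma Ee_lt1 r t : 0 < r -> 0 < t -> Ee r t < 1.
Proof. intros. unfold Ee. rewrite <- exp_0. apply exp_increasing. nra. Qed.

Lemma th_abs r t : Rabs (th r t) <= 1.
Proof.
  unfold th. pose proof (den_pos r t). pose proof (Ee_pos r t).
  rewrite Rabs_div by lra. rewrite (Rabs_right (1 + _)) by lra.
  apply Rle_div_l. lra. apply Rabs_le. nra.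
Qed.

Lemma sh_pos r t : 0 < sh r t.
Proof. unfold sh. pose proof (den_pos r t). pose proof (Ee_pos r t).
  apply Rdiv_lt_0_compat; lra. Qed.

Lemma sh_le1 r t : sh r t <= 1.
Proof. unfold sh. pose proof (den_pos r t). pose proof (Ee_pos r t).
  pose proof (pow2_ge_0 (Ee r t - 1)).
  apply Rle_div_l. lra. nra. Qed.

Lemma th_nonneg r t : 0 <= r -> 0 <= t -> 0 <= th r t.
Proof. intros. unfold th. pose proof (den_pos r t). pose proof (Ee_pos r t).
  pose proof (Ee_le1 r t H H0).
  apply Rdiv_le_0_compat; nra. Qed.

Lemma th_pos r t : 0 < r -> 0 < t -> 0 < th r t.
Proof. intros. unfold th. pose proof (den_pos r t). pose proof (Ee_pos r t).
  pose proof (Ee_lt1 r t H H0).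
  apply Rdiv_lt_0_compat; nra. Qed.

Lemma Fk_abs x r k t : Rabs (Fk x r k t) <= exp (-(x*t)).
Proof.
  unfold Fk. rewrite !Rabs_mult. rewrite <- RPow_abs.
  rewrite (Rabs_right (exp _)) by (left; apply exp_pos).
  pose proof (exp_pos (-(x*t))).
  pose proof (pow_le _ k (Rabs_pos (th r t))).
  assert (Rabs (th r t) ^ k <= 1). { rewrite <- (pow1 k). apply pow_incr. split. apply Rabs_pos. apply th_abs. }
  assert (Rabs (sh r t) <= 1). { rewrite Rabs_right. apply sh_le1. left; apply sh_pos. }
  pose proof (Rabs_pos (sh r t)).
  assert (Rabs (th r t) ^ k * Rabs (sh r t) <= 1) by nra.
  rewrite Rmult_assoc. rewrite <- (Rmult_1_r (exp (-(x*t)))) at 2.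
  apply Rmult_le_compat_l; lra.
Qed.

Lemma Fk_nonneg x r k t : 0 <= r -> 0 <= t -> 0 <= Fk x r k t.
Proof.
  intros. unfold Fk. pose proof (exp_pos (-(x*t))). pose proof (sh_pos r t).
  pose proof (pow_le _ k (th_nonneg r t H H0)). 
  apply Rmult_le_pos. apply Rmult_le_pos; lra. lra.
Qed.

Lemma Fk_pos x r k t : 0 < r -> 0 < t -> 0 < Fk x r k t.
Proof.
  intros. unfold Fk. pose proof (exp_pos (-(x*t))). pose proof (sh_pos r t).
  pose proof (pow_lt _ k (th_pos r t H H0)).
  apply Rmult_lt_0_compat. apply Rmult_lt_0_compat; lra. lra.
Qed.

Lemma Fk_le x r k t : 0 <= r -> 0 <= t -> Fk x r k t <= exp (-(x*t)).
Proof. intros. pose proof (Fk_abs x r k t). apply Rabs_le_between in H1. lra. Qed.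

Lemma Fk_cont x r k t : continuous (Fk x r k) t.
Proof. apply (ex_derive_continuous (K:=R_AbsRing) (V:=R_NormedModule)). eexists. apply Fk_derive. Qed.

Lemma Fk_exRInt x r k a b : ex_RInt (Fk x r k) a b.
Proof. apply (ex_RInt_continuous (V:=R_CompleteNormedModule)). intros. apply Fk_cont. Qed.

Lemma Fk_0 x r k : Fk x r k 0 = if k then 1 else 0.
Proof.
  unfold Fk, th, sh, Ee. rewrite !Rmult_0_r, !Ropp_0, !exp_0.
  destruct k; simpl; field.
Qed.

Lemma RInt_expm c b : 0 < c -> is_RInt (fun t => exp (-(c*t))) 0 b ((1 - exp (-(c*b)))/c).
Proof.
  intros Hc.
  assert (H := is_RInt_derive (fun t => - exp (-(c*t)) / c) (fun t => exp (-(c*t))) 0 b).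
  replace ((1 - exp (-(c*b)))/c) with (minus (- exp (-(c*b)) / c) (- exp (-(c*0)) / c)).
  apply H.
  - intros. auto_derive. auto. field. lra.
  - intros. apply (ex_derive_continuous (K:=R_AbsRing) (V:=R_NormedModule)). auto_derive. auto.
  - unfold minus, plus, opp; simpl. rewrite Rmult_0_r, Ropp_0, exp_0. field. lra.
Qed.


Lemma is_RInt_lin3 (f g h : R -> R) a b If Ig Ih c1 c2 c3 :
  is_RInt f a b If -> is_RInt g a b Ig -> is_RInt h a b Ih ->
  is_RInt (fun t => c1 * f t + c2 * g t + c3 * h t) a b (c1*If + c2*Ig + c3*Ih).
Proof.
  intros. apply (is_RInt_plus (V:=R_NormedModule)).
  apply (is_RInt_plus (V:=R_NormedModule)).
  all: apply (is_RInt_scal (V:=R_NormedModule)); auto.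
Qed.

Lemma RInt_cor (f : R -> R) a b : ex_RInt f a b -> is_RInt f a b (RInt f a b).
Proof. intros. apply (RInt_correct (V:=R_CompleteNormedModule)). auto. Qed.

Lemma IBP x r k b :
  x * RInt (Fk x r k) 0 b + r * (INR k + 1) * RInt (Fk x r (S k)) 0 b
  - r * INR k * RInt (Fk x r (pred k)) 0 b = Fk x r k 0 - Fk x r k b.
Proof.
  set (G := fun t => (-x) * (Fk x r k t) + (r * INR k) * (Fk x r (pred k) t)
                      + (-(r * (INR k + 1))) * (Fk x r (S k) t)).
  assert (H1 := is_RInt_lin3 _ _ _ 0 b _ _ _ (-x) (r * INR k) (-(r * (INR k + 1)))
       (RInt_cor _ _ _ (Fk_exRInt x r k 0 b))
       (RInt_cor _ _ _ (Fk_exRInt x r (pred k) 0 b))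
       (RInt_cor _ _ _ (Fk_exRInt x r (S k) 0 b))).
  assert (H2 : is_RInt G 0 b (minus (Fk x r k b) (Fk x r k 0))).
  { apply (is_RInt_derive (V:=R_CompleteNormedModule)).
    - intros. unfold G. eapply is_derive_eq. apply Fk_derive. simpl. ring.
    - intros. apply (ex_derive_continuous (K:=R_AbsRing) (V:=R_NormedModule)).
      unfold G. auto_derive. repeat split; eexists; apply Fk_derive. }
  apply (is_RInt_unique (V:=R_CompleteNormedModule)) in H1.
  apply (is_RInt_unique (V:=R_CompleteNormedModule)) in H2. fold G in H1. rewrite H1 in H2.
  unfold minus, plus, opp in H2; simpl in H2.
  lra.
Qed.

Definition Rk x r k (n : nat) := RInt (Fk x r k) 0 (INR n).

Lemma Rk_incr x r k n : 0 <= r -> Rk x r k n <= Rk x r k (S n).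
Proof.
  intros Hr. unfold Rk.
  rewrite <- (RInt_Chasles (V:=R_CompleteNormedModule) (Fk x r k) 0 (INR n) (INR (S n)))
    by apply Fk_exRInt.
  change (@plus _ ?a ?b) with (Rplus a b).
  assert (0 <= RInt (Fk x r k) (INR n) (INR (S n))).
  { apply RInt_ge_0. rewrite S_INR; lra. apply Fk_exRInt.
    intros. apply Fk_nonneg; auto. pose proof (pos_INR n). lra. }
  lra.
Qed.

Lemma exp_ex (f : R -> R) a b : (forall t, ex_derive f t) -> ex_RInt f a b.
Proof. intros. apply (ex_RInt_continuous (V:=R_CompleteNormedModule)). intros.
  apply (ex_derive_continuous (K:=R_AbsRing) (V:=R_NormedModule)). auto. Qed.

Lemma Rk_bound x r k n : 0 < x -> 0 <= r -> Rk x r k n <= 1 / x.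
Proof.
  intros Hx Hr. unfold Rk.
  apply Rle_trans with (RInt (fun t => exp (-(x*t))) 0 (INR n)).
  { apply RInt_le. apply pos_INR. apply Fk_exRInt. apply exp_ex. intros; auto_derive; auto.
    intros. apply Fk_le; lra. }
  rewrite (is_RInt_unique (V:=R_CompleteNormedModule) _ _ _ _ (RInt_expm x (INR n) Hx)).
  pose proof (exp_pos (-(x*INR n))).
  apply Rmult_le_compat_r. left; apply Rinv_0_lt_compat; auto. lra.
Qed.

Definition Jk x r k := real (Lim_seq (Rk x r k)).

Lemma Jk_lim x r k : 0 < x -> 0 <= r -> is_lim_seq (Rk x r k) (Jk x r k).
Proof.
  intros. unfold Jk. apply Lim_seq_correct'.
  apply ex_finite_lim_seq_incr with (1/x).
  intros; apply Rk_incr; auto. intros; apply Rk_bound; auto.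
Qed.

Lemma Jk_pos x r k : 0 < x -> 0 < r -> 0 < Jk x r k.
Proof.
  intros Hx Hr.
  apply Rlt_le_trans with (Rk x r k 2).
  { unfold Rk. apply RInt_gt_0. simpl; lra.
    intros; apply Fk_pos; lra. intros; apply Fk_cont. }
  apply is_lim_seq_incr_compare. apply Jk_lim; lra. intros; apply Rk_incr; lra.
Qed.

Lemma Jk_le x r k : 0 < x -> 0 < r -> Jk x r k <= 1/x.
Proof.
  intros Hx Hr.
  assert (H := is_lim_seq_le _ _ _ _ (fun n => Rk_bound x r k n Hx (Rlt_le _ _ Hr))
                (Jk_lim x r k Hx (Rlt_le _ _ Hr)) (is_lim_seq_const (1/x))).
  simpl in H. auto.
Qed.

Lemma exp_INR x n : exp (-(x * INR n)) = exp (-x) ^ n.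
Proof.
  induction n. simpl. rewrite Rmult_0_r, Ropp_0, exp_0; auto.
  rewrite S_INR. simpl. rewrite <- IHn. rewrite <- exp_plus. f_equal. ring.
Qed.

Lemma exp_seq_lim x : 0 < x -> is_lim_seq (fun n => exp (-(x * INR n))) 0.
Proof.
  intros. eapply is_lim_seq_ext. intros; symmetry; apply exp_INR.
  apply is_lim_seq_geom. rewrite Rabs_right by (left; apply exp_pos).
  rewrite <- exp_0. apply exp_increasing. lra.
Qed.

Lemma Fk_seq_lim x r k : 0 < x -> is_lim_seq (fun n => Fk x r k (INR n)) 0.
Proof.
  intros Hx.
  apply is_lim_seq_le_le with (fun n => - exp (-(x * INR n))) (fun n => exp (-(x * INR n))).
  intros n. pose proof (Fk_abs x r k (INR n)). apply Rabs_le_between in H. lra.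
  assert (H := proj1 (is_lim_seq_opp _ _) (exp_seq_lim x Hx)). simpl in H. rewrite Ropp_0 in H.
  exact H. apply exp_seq_lim; auto.
Qed.

Lemma lim_uniq (u : nat -> R) (a b : R) : is_lim_seq u a -> is_lim_seq u b -> a = b.
Proof. intros. apply is_lim_seq_unique in H. apply is_lim_seq_unique in H0.
  rewrite H in H0. injection H0; auto. Qed.

Lemma lim_scal (u : nat -> R) a (l : R) : is_lim_seq u l -> is_lim_seq (fun n => a * u n) (a*l).
Proof. intros H. apply (is_lim_seq_scal_l _ a) in H. simpl in H. exact H. Qed.

Lemma Jk_rec x r k : 0 < x -> 0 < r ->
  x * Jk x r k + r * (INR k + 1) * Jk x r (S k) - r * INR k * Jk x r (pred k)
  = if k then 1 else 0.
Proof.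
  intros Hx Hr.
  rewrite <- (Fk_0 x r k).
  apply (lim_uniq (fun n => x * Rk x r k n + r * (INR k + 1) * Rk x r (S k) n
                    - r * INR k * Rk x r (pred k) n)).
  - pose proof (lim_scal _ x _ (Jk_lim x r k Hx (Rlt_le _ _ Hr))) as H1.
    pose proof (lim_scal _ (r * (INR k + 1)) _ (Jk_lim x r (S k) Hx (Rlt_le _ _ Hr))) as H2.
    pose proof (lim_scal _ (r * INR k) _ (Jk_lim x r (pred k) Hx (Rlt_le _ _ Hr))) as H3.
    exact (is_lim_seq_minus' _ _ _ _ (is_lim_seq_plus' _ _ _ _ H1 H2) H3).
  - eapply is_lim_seq_ext. intros; unfold Rk; symmetry; apply IBP.
    pose proof (is_lim_seq_minus' _ _ _ _ (is_lim_seq_const (Fk x r k 0)) (Fk_seq_lim x r k Hx)) as H.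
    rewrite Rminus_0_r in H. exact H.
Qed.

Lemma Fk0_sum x r t : Fk x r 0 t + Fk (x + 2*r) r 0 t = 2 * exp (-((x+r)*t)).
Proof.
  unfold Fk, sh, Ee. pose proof (den_pos r t) as D. unfold Ee in D.
  replace (exp (- ((x + 2 * r) * t))) with (exp (-(x*t)) * exp (-(r*t)) ^ 2).
  replace (exp (- ((x + r) * t))) with (exp (-(x*t)) * exp (-(r*t))).
  simpl. field. simpl in D. lra.
  rewrite <- exp_plus. f_equal. ring.
  simpl. rewrite Rmult_1_r, <- !exp_plus. f_equal. ring.
Qed.

Lemma J0_func x r : 0 < x -> 0 < r -> Jk x r 0 + Jk (x + 2*r) r 0 = 2 / (x + r).
Proof.
  intros Hx Hr.
  assert (Hx2 : 0 < x + 2*r) by lra.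
  assert (Hxr : 0 < x + r) by lra.
  apply (lim_uniq (fun n => Rk x r 0 n + Rk (x+2*r) r 0 n)).
  - apply is_lim_seq_plus'; apply Jk_lim; lra.
  - apply is_lim_seq_ext with (fun n => 2 * ((1 - exp (-((x+r) * INR n)))/(x+r))).
    + intros n. unfold Rk.
      rewrite <- (RInt_plus (V:=R_CompleteNormedModule)) by apply Fk_exRInt.
      rewrite <- (is_RInt_unique (V:=R_CompleteNormedModule) _ _ _ _ (RInt_expm (x+r) (INR n) Hxr)).
      rewrite <- (RInt_scal (V:=R_CompleteNormedModule)).
      apply RInt_ext. intros. change (scal 2 ?a) with (2 * a). change (plus ?a ?b) with (a + b).
      symmetry. apply Fk0_sum.
      apply exp_ex. intros; auto_derive; auto.
    + replace (2 / (x + r)) with (2 * ((1 - 0)/(x+r))) by (field; lra).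
      apply lim_scal. unfold Rdiv.
      apply (is_lim_seq_ext (fun n => /(x+r) * (1 - exp (-((x+r) * INR n))))).
      intros; ring.
      rewrite Rmult_comm. apply lim_scal.
      apply is_lim_seq_minus'. apply is_lim_seq_const. apply exp_seq_lim; auto.
Qed.

Fixpoint cft (a : nat -> R) (b : R) (k n : nat) (w : R) : R :=
  match n with O => w | S n' => a k / (b + cft a b (S k) n' w) end.

Lemma cf_from_cft a b k n : cf_from a b k n = cft a b k n 0.
Proof. revert k; induction n; intros k; simpl; auto. rewrite IHn; auto. Qed.

Lemma cft_snoc a b k n w : cft a b k (S n) w = cft a b k n (a (k + n)%nat / (b + w)).
Proof.
  revert k; induction n; intros k.
  - simpl. rewrite Nat.add_0_r. auto.
  - change (cft a b k (S (S n)) w) with (a k / (b + cft a b (S k) (S n) w)).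
    rewrite IHn. simpl. rewrite <- plus_n_Sm. auto.
Qed.

Fixpoint Bq (a : nat -> R) (x : R) (n : nat) : R :=
  match n with 0 => 1 | S m => match m with 0 => x | S p => x * Bq a x m + a n * Bq a x p end end.
Fixpoint Aq (a : nat -> R) (x : R) (n : nat) : R :=
  match n with 0 => 0 | S m => match m with 0 => a 1%nat | S p => x * Aq a x m + a n * Aq a x p end end.
Fixpoint Pq (a : nat -> R) (n : nat) : R :=
  match n with 0 => 1 | S m => a n * Pq a m end.

Section Alg.
Variable a : nat -> R.
Variable x : R.
Hypothesis Hx : 0 < x.
Hypothesis Ha : forall n, 0 <= a n.

Lemma Bq_SS n : Bq a x (S (S n)) = x * Bq a x (S n) + a (S (S n)) * Bq a x n.
Proof. reflexivity. Qed.
Lemma Aq_SS n : Aq a x (S (S n)) = x * Aq a x (S n) + a (S (S n)) * Aq a x n.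
Proof. reflexivity. Qed.

Lemma Bq_pos2 n : 0 < Bq a x n /\ 0 < Bq a x (S n).
Proof.
  induction n. simpl; lra.
  destruct IHn. split; auto. rewrite Bq_SS. pose proof (Ha (S (S n))). nra.
Qed.
Lemma Bq_pos n : 0 < Bq a x n. Proof. apply Bq_pos2. Qed.

Lemma mobius n w : 0 <= w ->
  cft a x 1 (S n) w = (Aq a x (S n) + w * Aq a x n) / (Bq a x (S n) + w * Bq a x n).
Proof.
  revert w; induction n; intros w Hw.
  - simpl. field. lra.
  - rewrite cft_snoc. rewrite IHn.
    2: { apply Rdiv_le_0_compat. apply Ha. lra. }
    rewrite Aq_SS, Bq_SS. simpl (1 + S n)%nat.
    pose proof (Bq_pos n). pose proof (Bq_pos (S n)). pose proof (Ha (S (S n))).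
    assert (0 < Bq a x (S n) + a (S (S n)) / (x + w) * Bq a x n).
    { assert (0 <= a (S (S n)) / (x + w)) by (apply Rdiv_le_0_compat; lra). nra. }
    field. repeat split; try lra. nra.
Qed.

Lemma det n : Aq a x (S n) * Bq a x n - Aq a x n * Bq a x (S n) = (-1) ^ n * Pq a (S n).
Proof.
  induction n. simpl. ring.
  rewrite Aq_SS, Bq_SS. change (Pq a (S (S n))) with (a (S (S n)) * Pq a (S n)).
  simpl pow. 
  replace ((x * Aq a x (S n) + a (S (S n)) * Aq a x n) * Bq a x (S n) -
    Aq a x (S n) * (x * Bq a x (S n) + a (S (S n)) * Bq a x n))
    with (- a (S (S n)) * (Aq a x (S n) * Bq a x n - Aq a x n * Bq a x (S n))) by ring.
  rewrite IHn. ring.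
Qed.

Lemma divle p q s t : 0 < q -> 0 < t -> p * t <= s * q -> p / q <= s / t.
Proof.
  intros. apply Rmult_le_reg_r with (q * t). nra.
  replace (p / q * (q * t)) with (p * t) by (field; lra).
  replace (s / t * (q * t)) with (s * q) by (field; lra). auto.
Qed.

Lemma cft_diff n w : 0 <= w ->
  Rabs (cft a x 1 (S n) w - cft a x 1 (S n) 0) <= Pq a (S n) / (Bq a x (S n) * Bq a x n).
Proof.
  intros Hw. rewrite !mobius by lra.
  pose proof (Bq_pos n). pose proof (Bq_pos (S n)).
  assert (HP : 0 <= Pq a (S n)).
  { clear -Ha. induction (S n). simpl; lra. simpl. apply Rmult_le_pos; auto. }
  replace ((Aq a x (S n) + w * Aq a x n) / (Bq a x (S n) + w * Bq a x n) -
   (Aq a x (S n) + 0 * Aq a x n) / (Bq a x (S n) + 0 * Bq a x n))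
   with (- (w * (Aq a x (S n) * Bq a x n - Aq a x n * Bq a x (S n))) /
          (Bq a x (S n) * (Bq a x (S n) + w * Bq a x n))) by (field; nra).
  assert (Hd : 0 < Bq a x (S n) * (Bq a x (S n) + w * Bq a x n)) by (apply Rmult_lt_0_compat; nra).
  rewrite det. rewrite Rabs_div by lra.
  rewrite Rabs_Ropp, !Rabs_mult. rewrite <- RPow_abs.
  replace (Rabs (-1)) with 1 by (rewrite Rabs_left; lra). rewrite pow1.
  rewrite (Rabs_right w), (Rabs_right (Pq _ _)), (Rabs_right (Bq _ _ (S n))), (Rabs_right (_ + _)) by nra.
  apply divle. lra. nra.
  assert (0 <= Pq a (S n) * (Bq a x (S n) * Bq a x (S n))) by (apply Rmult_le_pos; nra). nra.
Qed.

End Alg.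

Definition asq (r : R) := fun n : nat => INR n ^ 2 * r ^ 2.

Section Growth.
Variable r x : R.
Hypothesis Hr : 0 < r.
Hypothesis Hx : 0 < x.
Let a := asq r.
Let g := Rmin 1 (x^2 / (2 * r^2)).

Lemma a_nonneg n : 0 <= a n.
Proof. unfold a, asq. pose proof (pos_INR n). apply Rmult_le_pos; apply pow_le; lra. Qed.

Lemma a_pos n : (1 <= n)%nat -> 0 < a n.
Proof. intros. unfold a, asq. apply le_INR in H. simpl in H.
  apply Rmult_lt_0_compat; apply pow_lt; lra. Qed.

Lemma Pq_pos n : 0 < Pq a n.
Proof. induction n. simpl; lra. simpl. apply Rmult_lt_0_compat; auto. apply a_pos; lia. Qed.

Lemma g_pos : 0 < g.
Proof. unfold g. apply Rmin_glb_lt. lra. apply Rdiv_lt_0_compat. nra. nra. Qed.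

Lemma B_sq2 n : g * (INR n + 1) * Pq a n <= Bq a x n ^ 2 /\
               g * (INR (S n) + 1) * Pq a (S n) <= Bq a x (S n) ^ 2.
Proof.
  induction n.
  - simpl. unfold a, asq. simpl. split.
    + pose proof (Rmin_l 1 (x^2/(2*r^2))). fold g in H. lra.
    + pose proof (Rmin_r 1 (x^2/(2*r^2))). fold g in H.
      assert (g * (2 * r^2) <= x^2).
      { apply Rmult_le_reg_r with (/ (2*r^2)). apply Rinv_0_lt_compat; nra.
        rewrite Rmult_assoc, Rinv_r by nra. unfold Rdiv in H. lra. }
      simpl in H0. nra.
  - destruct IHn as [H1 H2]. split; auto.
    rewrite Bq_SS. change (Pq a (S (S n))) with (a (S (S n)) * Pq a (S n)).
    change (Pq a (S n)) with (a (S n) * Pq a n) in *.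
    pose proof (Bq_pos a x Hx a_nonneg n). pose proof (Bq_pos a x Hx a_nonneg (S n)).
    pose proof (a_pos (S (S n)) ltac:(lia)).
    assert (HB : a (S (S n)) * Bq a x n <= x * Bq a x (S n) + a (S (S n)) * Bq a x n) by nra.
    assert (HB2 : (a (S (S n)) * Bq a x n)^2 <= (x * Bq a x (S n) + a (S (S n)) * Bq a x n)^2).
    { apply pow_incr. split; nra. }
    eapply Rle_trans; [|exact HB2].
    pose proof (Pq_pos n) as HP. pose proof g_pos.
    pose proof (pos_INR n) as HN.
    assert (E : a (S (S n)) ^ 2 * (g * (INR n + 1) * Pq a n) -
       g * (INR (S (S n)) + 1) * (a (S (S n)) * (a (S n) * Pq a n))
       = g * Pq a n * (INR n + 2)^2 * r^4 * (INR n + 1)).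
    { unfold a, asq. rewrite !S_INR. ring. }
    assert (0 <= g * Pq a n * (INR n + 2)^2 * r^4 * (INR n + 1)).
    { repeat apply Rmult_le_pos; try lra; apply pow_le; lra. }
    assert (a (S (S n)) ^ 2 * (g * (INR n + 1) * Pq a n) <= (a (S (S n)) * Bq a x n) ^ 2).
    { rewrite Rpow_mult_distr. apply Rmult_le_compat_l. apply pow_le; lra. auto. }
    lra.
Qed.

Definition Qv n := Bq a x (S n) * Bq a x n / Pq a (S n).

Let d := x * g / r^2.

Lemma ln_step (N : R) : 0 <= N -> ln (N + 3) - ln (N + 2) <= 1 / (N + 2).
Proof.
  intros. replace (N + 3) with ((N + 2) * ((N+3)/(N+2))) at 1 by (field; lra).
  rewrite ln_mult. 2: lra. 2: apply Rdiv_lt_0_compat; lra.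
  pose proof (exp_ineq1_le (ln ((N+3)/(N+2)))). rewrite exp_ln in H0 by (apply Rdiv_lt_0_compat; lra).
  replace (1 / (N+2)) with ((N+3)/(N+2) - 1) by (field; lra). lra.
Qed.

Lemma Qv_lb n : d * (ln (INR n + 2) - ln 2) <= Qv n.
Proof.
  induction n.
  - simpl. replace (0 + 2) with 2 by ring. rewrite Rminus_diag, Rmult_0_r.
    unfold Qv. simpl. apply Rdiv_le_0_compat. lra. unfold a, asq. simpl. nra.
  - assert (Hrec : Qv (S n) = x * Bq a x (S n) ^ 2 / Pq a (S (S n)) + Qv n).
    { unfold Qv. rewrite Bq_SS. change (Pq a (S (S n))) with (a (S (S n)) * Pq a (S n)).
      pose proof (Pq_pos (S n)). pose proof (a_pos (S (S n)) ltac:(lia)). field. lra. }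
    assert (Hinc : d / (INR n + 2) <= x * Bq a x (S n) ^ 2 / Pq a (S (S n))).
    { destruct (B_sq2 n) as [_ H].
      change (Pq a (S (S n))) with (a (S (S n)) * Pq a (S n)).
      pose proof (Pq_pos (S n)). pose proof (a_pos (S (S n)) ltac:(lia)).
      pose proof (pos_INR n).
      replace (d / (INR n + 2)) with (x * (g * (INR (S n) + 1) * Pq a (S n)) / (a (S (S n)) * Pq a (S n))).
      apply Rmult_le_compat_r. left; apply Rinv_0_lt_compat; nra.
      apply Rmult_le_compat_l; lra.
      unfold d, a, asq in *. rewrite !S_INR. field. repeat split; try lra. }
    rewrite Hrec. pose proof (ln_step (INR n) (pos_INR n)).
    rewrite S_INR. replace (INR n + 1 + 2) with (INR n + 3) by ring.
    assert (0 <= d) by (unfold d; pose proof g_pos; apply Rdiv_le_0_compat; nra).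
    assert (d * (ln (INR n + 3) - ln (INR n + 2)) <= d / (INR n + 2)).
    { unfold Rdiv. replace (/ (INR n + 2)) with (1 / (INR n + 2)) by (field; pose proof (pos_INR n); lra).
      apply Rmult_le_compat_l; auto. }
    lra.
Qed.

Lemma Qv_pos n : 0 < Qv n.
Proof. unfold Qv. pose proof (Bq_pos a x Hx a_nonneg n). pose proof (Bq_pos a x Hx a_nonneg (S n)).
  pose proof (Pq_pos (S n)). apply Rdiv_lt_0_compat; nra. Qed.

Lemma tail_cft (t : nat -> R) :
  (forall k, (1 <= k)%nat -> t k = a k / (x + t (S k))) ->
  forall n k, (1 <= k)%nat -> t k = cft a x k n (t (k + n)%nat).
Proof.
  intros Ht n. induction n; intros k Hk.
  - simpl. rewrite Nat.add_0_r. auto.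
  - simpl. rewrite Ht by auto. rewrite (IHn (S k)) by lia. rewrite <- plus_n_Sm. auto.
Qed.

Lemma cf_conv (t : nat -> R) :
  (forall k, 0 <= t k) ->
  (forall k, (1 <= k)%nat -> t k = a k / (x + t (S k))) ->
  is_lim_seq (cf_convergent a x) (t 1%nat).
Proof.
  intros Hpos Ht.
  apply is_lim_seq_spec. intros eps.
  assert (Hd : 0 < d) by (unfold d; pose proof g_pos; apply Rdiv_lt_0_compat; nra).
  destruct (INR_unbounded (2 * exp (1 / (eps * d)))) as [N HN].
  exists (S N). intros n Hn. destruct n as [|m]. lia.
  unfold cf_convergent. rewrite cf_from_cft.
  rewrite (tail_cft t Ht (S m) 1%nat) by lia.
  rewrite Rabs_minus_sym.
  eapply Rle_lt_trans. apply (cft_diff a x Hx a_nonneg). apply Hpos.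
  fold (Qv m) in *. 
  replace (Pq a (S m) / (Bq a x (S m) * Bq a x m)) with (1 / Qv m)
    by (unfold Qv; pose proof (Qv_pos m); unfold Qv in H;
        pose proof (Bq_pos a x Hx a_nonneg m); pose proof (Bq_pos a x Hx a_nonneg (S m));
        pose proof (Pq_pos (S m)); field; repeat split; lra).
  pose proof (Qv_lb m). pose proof (Qv_pos m).
  assert (HmN : INR N <= INR m) by (apply le_INR; lia).
  pose proof (exp_pos (1 / (eps * d))).
  assert (Hl : 1 / (eps * d) < ln (INR m + 2) - ln 2).
  { rewrite <- (ln_exp (1 / (eps * d))).
    replace (ln (INR m + 2) - ln 2) with (ln ((INR m + 2) / 2)).
    apply ln_increasing. auto. apply Rmult_lt_reg_l with 2. lra.
    replace (2 * ((INR m + 2) / 2)) with (INR m + 2) by field. lra.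
    pose proof (pos_INR m). unfold Rdiv. rewrite ln_mult, ln_Rinv; try lra.
    all: try (apply Rinv_0_lt_compat; lra). }
  assert (1 / eps < Qv m).
  { apply Rmult_lt_compat_l with (r := d) in Hl; auto.
    replace (d * (1 / (eps * d))) with (1/eps) in Hl by (field; split; pose proof (cond_pos eps); lra).
    lra. }
  pose proof (cond_pos eps).
  apply Rmult_lt_reg_r with (Qv m). auto.
  replace (1 / Qv m * Qv m) with 1 by (field; lra).
  apply Rmult_lt_reg_l with (/ eps). apply Rinv_0_lt_compat; auto.
  replace (/ eps * 1) with (1 / eps) by (field; lra).
  replace (/ eps * (eps * Qv m)) with (Qv m) by (field; lra). auto.
Qed.

End Growth.

Theorem theorem8 (psi : R -> R) (r : R) (hr : 0 < r) :
  let phi := fun s => s + psi r in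
  exists K : R -> R,
    (forall s, s > - psi r ->
       cf_converges_to (fun n => (INR n) ^ 2 * r ^ 2) (phi s) (K s)) /\
    let f := fun s => 1 / (2 * phi s + 2 * K s) in
    (forall s, s > - psi r -> f s + f (s + 2 * r) = 1 / (phi s + r)) /\
    is_lim f p_infty 0 /\
    (forall g : R -> R,
       (forall s, s > - psi r -> g s + g (s + 2 * r) = 1 / (phi s + r)) ->
       is_lim g p_infty 0 ->
       forall s, s > - psi r -> g s = f s).
Proof.
  intros phi.
  exists (fun s => 1 / Jk (phi s) r 0 - phi s).
  assert (Hf : forall s, s > - psi r ->
     1 / (2 * phi s + 2 * (1 / Jk (phi s) r 0 - phi s)) = Jk (phi s) r 0 / 2).
  { intros s Hs. assert (0 < phi s) by (unfold phi; lra).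
    pose proof (Jk_pos (phi s) r 0 H hr). field. lra. }
  split.
  { intros s Hs. assert (Hx : 0 < phi s) by (unfold phi; lra).
    set (x := phi s) in *.
    set (t := fun k => r * INR k * Jk x r k / Jk x r (pred k)).
    assert (Ht0 : forall k, 0 <= t k).
    { intros k. unfold t. pose proof (Jk_pos x r k Hx hr). pose proof (Jk_pos x r (pred k) Hx hr).
      pose proof (pos_INR k). apply Rdiv_le_0_compat; [|lra].
      apply Rmult_le_pos; [apply Rmult_le_pos|]; lra. }
    assert (Htr : forall k, (1 <= k)%nat -> t k = asq r k / (x + t (S k))).
    { intros k Hk. unfold t, asq. simpl pred.
      destruct k as [|k]. lia. simpl pred.
      pose proof (Jk_rec x r (S k) Hx hr) as E. simpl pred in E.
      pose proof (Jk_pos x r k Hx hr). pose proof (Jk_pos x r (S k) Hx hr).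
      pose proof (Jk_pos x r (S (S k)) Hx hr). pose proof (pos_INR k).
      rewrite !S_INR in *.
      assert (x + r * (INR k + 1 + 1) * Jk x r (S (S k)) / Jk x r (S k)
              = r * (INR k + 1) * Jk x r k / Jk x r (S k)).
      { apply Rmult_eq_reg_r with (Jk x r (S k)). 2: lra.
        field_simplify; try lra. }
      rewrite H3. field. repeat split; try lra. }
    pose proof (cf_conv r x hr Hx t Ht0 Htr) as L.
    unfold cf_converges_to. change (fun n : nat => INR n ^ 2 * r ^ 2) with (asq r).
    replace (1 / Jk x r 0 - x) with (t 1%nat). exact L.
    unfold t. simpl pred. pose proof (Jk_rec x r 0 Hx hr) as E. simpl in E.
    pose proof (Jk_pos x r 0 Hx hr). change (INR 1) with 1.
    replace (r * 1 * Jk x r 1) with (1 - x * Jk x r 0) by lra. field. lra. }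
  intros f.
  assert (Hf' : forall s, s > - psi r -> f s = Jk (phi s) r 0 / 2) by (intros; apply Hf; auto).
  assert (Hfeq : forall s, s > - psi r -> f s + f (s + 2 * r) = 1 / (phi s + r)).
  { intros s Hs. rewrite !Hf' by lra.
    assert (0 < phi s) by (unfold phi; lra).
    replace (phi (s + 2*r)) with (phi s + 2 * r) by (unfold phi; ring).
    pose proof (J0_func (phi s) r H hr). field_simplify; try lra. }
  split; [exact Hfeq|].
  assert (Hflim : is_lim f p_infty 0).
  { apply is_lim_spec. intros eps. simpl.
    exists (Rmax 0 (1 / eps) - psi r). intros s Hs.
    pose proof (Rmax_l 0 (1/eps)). pose proof (Rmax_r 0 (1/eps)).
    rewrite Hf' by lra.
    assert (Hx : 0 < phi s) by (unfold phi; lra).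
    pose proof (Jk_pos (phi s) r 0 Hx hr). pose proof (Jk_le (phi s) r 0 Hx hr).
    pose proof (cond_pos eps).
    assert (1 / phi s < eps).
    { apply Rmult_lt_reg_r with (phi s). auto.
      replace (1 / phi s * phi s) with 1 by (field; lra).
      assert (1 / eps < phi s) by (unfold phi; lra).
      apply Rmult_lt_compat_l with (r := eps) in H4; auto.
      replace (eps * (1 / eps)) with 1 in H4 by (field; lra). lra. }
    rewrite Rminus_0_r, Rabs_right by lra. lra. }
  split; [exact Hflim|].
  intros g Hg Hglim s Hs.
  set (h := fun s => g s - f s).
  assert (Hh : forall n, Rabs (h s) = Rabs (h (s + 2 * r * INR n))).
  { induction n. simpl. rewrite Rmult_0_r, Rplus_0_r. auto.
    rewrite IHn. rewrite S_INR.
    pose proof (pos_INR n).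
    assert (s + 2 * r * INR n > - psi r) by nra.
    pose proof (Hg _ H0). pose proof (Hfeq _ H0).
    replace (s + 2 * r * (INR n + 1)) with (s + 2 * r * INR n + 2 * r) by ring.
    unfold h. replace (g (s + 2 * r * INR n + 2 * r) - f (s + 2 * r * INR n + 2 * r))
      with (- (g (s + 2 * r * INR n) - f (s + 2 * r * INR n))) by lra.
    rewrite Rabs_Ropp. auto. }
  assert (Hhl : is_lim h p_infty 0).
  { unfold h. pose proof (is_lim_minus' g f p_infty 0 0 Hglim Hflim) as HH.
    rewrite Rminus_0_r in HH. exact HH. }
  apply is_lim_spec in Hhl.
  assert (Habs : forall eps, 0 < eps -> Rabs (h s) < eps).
  { intros e He. destruct (Hhl (mkposreal e He)) as [M HM]. simpl in HM.
    destruct (INR_unbounded ((M - s) / (2 * r))) as [n Hn].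
    rewrite (Hh n). specialize (HM (s + 2 * r * INR n)).
    rewrite Rminus_0_r in HM. apply HM.
    apply Rmult_lt_compat_l with (r := 2 * r) in Hn. 2: lra.
    replace (2 * r * ((M - s) / (2 * r))) with (M - s) in Hn by (field; lra). lra. }
  assert (h s = 0).
  { destruct (Req_dec (h s) 0); auto.
    pose proof (Habs (Rabs (h s)) (Rabs_pos_lt _ H)). lra. }
  unfold h in H. lra.
Qed.
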